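(* Let $\alpha=(\alpha_1,\dots,\alpha_s)\in\mathbb{K}_s$ and $1\le i\le s$. If $\alpha^i$ is symmetric, then $\alpha^j$ is non-symmetric for every $1\le j\le s$ with $j\neq i$.
   Context: $\mathbb{K}_s=\{(\alpha_1,\dots,\alpha_s)\in\mathbb{Z}^s:\ \alpha_k\alpha_{k+1}<0 \text{ for all } 1\le k\le s-1\}$, with all entries nonzero. For $\beta=(\beta_1,\dots,\beta_s)\in\mathbb{Z}^s$, $-\beta=(-\beta_1,\dots,-\beta_s)$ and $\overline{\beta}=(\beta_s,\dots,\beta_1)$; $\beta$ is symmetric if $\beta=-\overline{\beta}$ (as tuples). For $1\le i\le s$, $\alpha^i=(\alpha_1,\dots,\alpha_{i-1},\alpha_i*1,\alpha_{i+1},\dots,\alpha_s)$, where $\alpha_i*1=\alpha_i-1$ if $\alpha_i>0$ and $\alpha_i*1=\alpha_i+1$ otherwise. *)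

(* Defs.v *)
From mathcomp Require Import all_boot all_order all_algebra.
Set Implicit Arguments. Unset Strict Implicit. Unset Printing Implicit Defensive.
Import Order.TTheory GRing.Theory Num.Theory.
Local Open Scope ring_scope.

(* K_s: integer tuples of length s, all entries nonzero, consecutive entries of
   opposite sign (alpha_k * alpha_{k+1} < 0). Sequences are 0-indexed. *)
Definition inK (s : nat) (alpha : seq int) : bool :=
  (size alpha == s) &&
  all (fun x => x != 0) alpha &&
  [forall k : 'I_s, (k.+1 < s)%N ==> (alpha`_k * alpha`_k.+1 < 0)].

Definition negseq (beta : seq int) : seq int := map (fun x => - x) beta.

Definition symmetric_seq (beta : seq int) : bool := beta == negseq (rev beta).

Definition star1 (a : int) : int := if 0 < a then a - 1 else a + 1.

Definition alpha_up (alpha : seq int) (i : nat) : seq int :=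
  set_nth 0 alpha i (star1 alpha`_i).

(* Main.v *)
Require Import Defs.
From mathcomp Require Import all_boot all_order all_algebra.
From mathcomp Require Import zify.
Local Open Scope ring_scope.

Lemma sym_nth (b : seq int) k : symmetric_seq b -> (k < size b)%N ->
  b`_k = - b`_(size b - k.+1).
Proof.
move=> /eqP H Hk.
by rewrite {1}H /negseq (nth_map 0) ?size_rev // nth_rev.
Qed.

Lemma up_nth alpha n m : (alpha_up alpha n)`_m = if m == n then star1 alpha`_n else alpha`_m.
Proof. by rewrite /alpha_up nth_set_nth. Qed.

Lemma up_size alpha n : (n < size alpha)%N -> size (alpha_up alpha n) = size alpha.
Proof. move=> H; rewrite /alpha_up size_set_nth; apply/maxn_idPr; exact H. Qed.

Theorem lemma2 (s : nat) (alpha : seq int) (i : nat) :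
  inK s alpha -> (i < s)%N -> symmetric_seq (alpha_up alpha i) ->
  forall j : nat, (j < s)%N -> j <> i -> ~~ symmetric_seq (alpha_up alpha j).
Proof.
move=> /andP[/andP[/eqP Hs Hnz] _] Hi Hsi j Hj Hji; apply/negP => Hsj.
have nz : forall k, (k < s)%N -> alpha`_k != 0.
  move=> k Hk; apply: (allP Hnz); apply: mem_nth; by rewrite Hs.
have Ei := @sym_nth _ i Hsi; have Ej := @sym_nth _ i Hsj.
rewrite !up_size ?Hs // in Ei Ej.
have Ei' := Ei Hi; have Ej' := Ej Hi.
rewrite !up_nth in Ei' Ej'.
have nzi := nz i Hi; have nzi' := nz (s - i.+1)%N ltac:(lia).
case: (eqVneq (s - i.+1)%N i) => [E|NE].
  rewrite E in Ej'.
  have Hji' : (i == j) = false by apply/eqP => /esym.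
  rewrite Hji' in Ej'.
  move: nzi; rewrite /star1; lia.
rewrite eqxx (negbTE NE) in Ei'.
have Hji' : (i == j) = false by apply/eqP => /esym.
rewrite Hji' in Ej'.
case: (eqVneq (s - i.+1)%N j) => [E|NE2].
  rewrite E eqxx -E in Ej'.
  move: Ei' Ej' nzi nzi'; rewrite /star1.
  case: ifP; case: ifP; lia.
rewrite (negbTE NE2) in Ej'.
move: Ei' Ej'; rewrite /star1; case: ifP; lia.
Qed.
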